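(* Let $S$ be a nondegenerate simplex in $\mathbb R^n$ with $S\subset Q_n\subset nS$, with vertices $x^{(1)},\dots,x^{(n+1)}$, and let $\lambda_j(x)=l_{1j}x_1+\dots+l_{nj}x_n+l_{n+1,j}$ ($1\le j\le n+1$) be its basic Lagrange polynomials. Then: (i) $\max_{x\in\mathrm{ver}(Q_n)}\lambda_j(x)=1$ for all $j=1,\dots,n+1$; (ii) $\max_{x\in\mathrm{ver}(Q_n)}(-\lambda_j(x))=\frac{n-1}{n+1}$ for all $j=1,\dots,n+1$; (iii) the same equalities as in (i) and (ii) hold with maxima taken over $x\in Q_n$; (iv) $c(S)=c(Q_n)=(\tfrac12,\dots,\tfrac12)$; (v) for every integer $k\ge0$, $\frac{1}{n^{k+1}}Q_n\subset\frac1{n^k}S\subset\frac1{n^k}Q_n$ and $n^kS\subset n^kQ_n\subset n^{k+1}S$, i.e. $\dots\subset\frac1{n^2}S\subset\frac1nQ_n\subset S\subset Q_n\subset nS\subset n^2Q_n\subset n^3S\subset\dots$; (vi) $\sum_{j=1}^{n+1}|l_{ij}|=2$ for $1\le i\le n$, and $\sum_{i=1}^{n}|l_{ij}|=\frac{2n}{n+1}$ for $1\le j\le n+1$; (vii) for $1\le j\le n+1$: $\sum_{i\le n,\ l_{ij}\ge0}l_{ij}=1-l_{n+1,j}$ and $\sum_{i\le n,\ l_{ij}<0}|l_{ij}|=\frac{n-1}{n+1}+l_{n+1,j}$; (viii) $Q_n\subset\bigcap_{j=1}^{n+1}D_j$, where $D_j=\{x\in\mathbb R^n: -\frac{n-1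}{n+1}\le\lambda_j(x)\le1\}$.
   Context: $Q_n=[0,1]^n$. For a convex body $\Omega$ and $\sigma>0$, $\sigma\Omega$ denotes the homothetic image of $\Omega$ with center at the center of gravity $c(\Omega)$ of $\Omega$ and ratio $\sigma$. For a nondegenerate simplex $S$ with vertices $x^{(j)}=(x^{(j)}_1,\dots,x^{(j)}_n)$, $1\le j\le n+1$, the vertex matrix $A$ is the $(n+1)\times(n+1)$ matrix whose $j$th row is $(x^{(j)}_1,\dots,x^{(j)}_n,1)$; writing $A^{-1}=(l_{ij})$, the basic Lagrange polynomials are $\lambda_j(x)=l_{1j}x_1+\dots+l_{nj}x_n+l_{n+1,j}$; they satisfy $\lambda_j(x^{(k)})=\delta_{jk}$. *)

(* Defs.v *)
(* Points of R^n are row vectors 'rV[R]_n; coordinate i of x is x 0 i. *)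
From HB Require Import structures.
From mathcomp Require Import all_boot all_order all_algebra.
Set Implicit Arguments. Unset Strict Implicit. Unset Printing Implicit Defensive.
Import Order.TTheory GRing.Theory Num.Theory.
Local Open Scope ring_scope.

Section Defs.
Variable R : realFieldType.
Variable n : nat.

Definition pset := 'rV[R]_n -> Prop.
Definition psubset (A B : pset) : Prop := forall x, A x -> B x.

Definition cube : pset := fun x => forall i : 'I_n, 0 <= x 0 i <= 1.
Definition cube_vertex : pset := fun x => forall i : 'I_n, x 0 i = 0 \/ x 0 i = 1.

Definition simplex (V : 'M[R]_(n.+1, n)) : pset :=
  fun x => exists b : 'I_n.+1 -> R,
    [/\ forall j, 0 <= b j, \sum_j b j = 1 & x = \sum_j b j *: row j V].

(* vertex matrix A: j-th row is (x^(j)_1, ..., x^(j)_n, 1) *)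
Definition vertex_matrix (V : 'M[R]_(n.+1, n)) : 'M[R]_(n.+1) :=
  \matrix_(j, k) (if unlift ord_max k is Some i then V j i else 1).

(* l_{ij} = (A^{-1})_{ij}; coefficient rows i = 1..n are lift ord_max i, row n+1 is ord_max *)
Definition lcoef (V : 'M[R]_(n.+1, n)) : 'M[R]_(n.+1) := invmx (vertex_matrix V).

Definition lagr (V : 'M[R]_(n.+1, n)) (j : 'I_n.+1) (x : 'rV[R]_n) : R :=
  \sum_(i < n) lcoef V (lift ord_max i) j * x 0 i + lcoef V ord_max j.

Definition simplex_center (V : 'M[R]_(n.+1, n)) : 'rV[R]_n :=
  (n.+1%:R)^-1 *: \sum_j row j V.
Definition cube_center : 'rV[R]_n := const_mx (2^-1).

Definition homot (c : 'rV[R]_n) (s : R) (Om : pset) : pset :=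
  fun x => exists2 y, Om y & x = c + s *: (y - c).

Definition is_max (A : pset) (f : 'rV[R]_n -> R) (m : R) : Prop :=
  (exists2 x, A x & f x = m) /\ (forall x, A x -> f x <= m).
End Defs.

(* Main.v *)
Require Import Defs.
From HB Require Import structures.
From mathcomp Require Import all_boot all_order all_algebra.
From mathcomp Require Import ring lra.
Import Order.TTheory GRing.Theory Num.Theory.
Local Open Scope ring_scope.
Set Implicit Arguments. Unset Strict Implicit.

Definition pp (R : realFieldType) (r : R) : R := if 0 <= r then r else 0.
Definition nn (R : realFieldType) (r : R) : R := if r < 0 then - r else 0.

Lemma pp_ge0 (R : realFieldType) (r : R) : 0 <= pp r.
Proof. rewrite /pp; case: ifP => h; lra. Qed.
Lemma nn_ge0 (R : realFieldType) (r : R) : 0 <= nn r.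
Proof. rewrite /nn; case: ifP => h; lra. Qed.
Lemma ppnn (R : realFieldType) (r : R) : r = pp r - nn r.
Proof. rewrite /pp /nn; case: ifP => h; case: ifP => h'; lra. Qed.
Lemma ppnn_abs (R : realFieldType) (r : R) : `|r| = pp r + nn r.
Proof. rewrite /pp /nn; case: ifP => h; case: ifP => h'.
- lra. - rewrite ger0_norm //; lra. - rewrite ltr0_norm //; lra.
- have : r < 0 by rewrite ltNge h. lra. Qed.
Lemma pp_bound (R : realFieldType) (r x : R) : 0 <= x <= 1 -> r * x <= pp r.
Proof. move=> /andP[h0 h1]; rewrite /pp; case: ifP => h; nra. Qed.
Lemma nn_bound (R : realFieldType) (r x : R) : 0 <= x <= 1 -> - nn r <= r * x.
Proof. move=> /andP[h0 h1]; rewrite /nn; case: ifP => h; nra. Qed.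

Section X. End X.

Lemma LA_entry (R : realFieldType) (n : nat) (V : 'M[R]_(n.+1, n))
  (hU : vertex_matrix V \in unitmx) r k :
  \sum_j lcoef V r j * vertex_matrix V j k = (r == k)%:R.
Proof. by have := congr1 (fun M : 'M[R]_n.+1 => M r k) (mulVmx hU); rewrite !mxE. Qed.

Lemma AL_entry (R : realFieldType) (n : nat) (V : 'M[R]_(n.+1, n))
  (hU : vertex_matrix V \in unitmx) r k :
  \sum_j vertex_matrix V r j * lcoef V j k = (r == k)%:R.
Proof. by have := congr1 (fun M : 'M[R]_n.+1 => M r k) (mulmxV hU); rewrite !mxE. Qed.

Lemma sum_a (R : realFieldType) (n : nat) (V : 'M[R]_(n.+1, n))
  (hU : vertex_matrix V \in unitmx) (i : 'I_n) :
  \sum_j lcoef V (lift ord_max i) j = 0.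
Proof.
have := LA_entry hU (lift ord_max i) ord_max.
rewrite eq_sym (negbTE (neq_lift _ _)) /= => E; apply: etrans E; apply: esym.
by apply: eq_bigr => j _; rewrite mxE unlift_none mulr1.
Qed.

Lemma sum_b (R : realFieldType) (n : nat) (V : 'M[R]_(n.+1, n))
  (hU : vertex_matrix V \in unitmx) :
  \sum_j lcoef V ord_max j = 1.
Proof.
have := LA_entry hU ord_max ord_max.
rewrite eqxx => E; apply: etrans E; apply: esym.
by apply: eq_bigr => j _; rewrite mxE unlift_none mulr1.
Qed.

Lemma sum_aV (R : realFieldType) (n : nat) (V : 'M[R]_(n.+1, n))
  (hU : vertex_matrix V \in unitmx) (i i' : 'I_n) :
  \sum_j lcoef V (lift ord_max i) j * V j i' = (i == i')%:R.
Proof.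
have := LA_entry hU (lift ord_max i) (lift ord_max i').
rewrite (inj_eq (@lift_inj _ _)) => E; apply: etrans E; apply: esym.
by apply: eq_bigr => j _; rewrite mxE liftK.
Qed.

Lemma widen_lift (n : nat) (i : 'I_n) : widen_ord (leqnSn n) i = lift ord_max i.
Proof. by apply: val_inj; rewrite /= /bump leqNgt ltn_ord. Qed.

Lemma lagr_vertex (R : realFieldType) (n : nat) (V : 'M[R]_(n.+1, n))
  (hU : vertex_matrix V \in unitmx) j k :
  lagr V j (row k V) = (k == j)%:R.
Proof.
rewrite -(AL_entry hU) big_ord_recr /= /lagr.
rewrite mxE unlift_none mul1r; congr (_ + _).
apply: eq_bigr => i _; rewrite widen_lift !mxE liftK mulrC.
by [].
Qed.

Lemma sum_bV (R : realFieldType) (n : nat) (V : 'M[R]_(n.+1, n))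
  (hU : vertex_matrix V \in unitmx) (i : 'I_n) :
  \sum_j lcoef V ord_max j * V j i = 0.
Proof.
have := LA_entry hU ord_max (lift ord_max i).
rewrite (negbTE (neq_lift _ _)) /= => E; apply: etrans E; apply: esym.
by apply: eq_bigr => j _; rewrite mxE liftK.
Qed.

Lemma lagr_comb (R : realFieldType) (n : nat) (V : 'M[R]_(n.+1, n)) j
  (w : 'I_n.+1 -> R) : \sum_k w k = 1 ->
  lagr V j (\sum_k w k *: row k V) = \sum_k w k * lagr V j (row k V).
Proof.
move=> hw; rewrite /lagr.
under [RHS]eq_bigr do rewrite mulrDr mulr_sumr.
rewrite big_split /= -mulr_suml hw mul1r exchange_big /=.
congr (_ + _); apply: eq_bigr => i _.
rewrite summxE mulr_sumr; apply: eq_bigr => k _; rewrite !mxE.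
by rewrite mulrCA.
Qed.

Lemma lagr_seg (R : realFieldType) (n : nat) (V : 'M[R]_(n.+1, n)) j c t y :
  lagr V j (c + t *: (y - c)) = lagr V j c + t * (lagr V j y - lagr V j c).
Proof.
rewrite /lagr.
have -> : \sum_(i < n) lcoef V (lift ord_max i) j * (c + t *: (y - c)) 0 i =
   \sum_(i < n) lcoef V (lift ord_max i) j * c 0 i +
   t * (\sum_(i < n) lcoef V (lift ord_max i) j * y 0 i -
        \sum_(i < n) lcoef V (lift ord_max i) j * c 0 i).
  rewrite -sumrB mulr_sumr -big_split /=; apply: eq_bigr => i _.
  by rewrite !mxE; ring.
ring.
Qed.

Lemma lagr_sum (R : realFieldType) (n : nat) (V : 'M[R]_(n.+1, n))
  (hU : vertex_matrix V \in unitmx) x :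
  \sum_j lagr V j x = 1.
Proof.
rewrite /lagr big_split /= sum_b // exchange_big /= big1 ?add0r //.
by move=> i _; rewrite -mulr_suml sum_a // mul0r.
Qed.

Lemma sum_aV1 (R : realFieldType) (n : nat) (V : 'M[R]_(n.+1, n))
  (hU : vertex_matrix V \in unitmx) (i : 'I_n) :
  \sum_j lcoef V (lift ord_max i) j * V j i = 1.
Proof. by rewrite sum_aV // eqxx. Qed.

Lemma sum_aV0 (R : realFieldType) (n : nat) (V : 'M[R]_(n.+1, n))
  (hU : vertex_matrix V \in unitmx) (i i' : 'I_n) : i != i' ->
  \sum_j lcoef V (lift ord_max i) j * V j i' = 0.
Proof. by move=> h; rewrite sum_aV // (negbTE h). Qed.

Lemma lagr_decomp (R : realFieldType) (n : nat) (V : 'M[R]_(n.+1, n))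
  (hU : vertex_matrix V \in unitmx) x :
  x = \sum_j lagr V j x *: row j V.
Proof.
apply/rowP => i; rewrite summxE.
under eq_bigr do rewrite !mxE /lagr mulrDl mulr_suml.
rewrite big_split /= sum_bV // addr0 exchange_big /=.
rewrite (bigD1 i) //= [X in _ + X]big1 ?addr0.
  rewrite -[in LHS](mulr1 (x 0 i)) -(sum_aV1 hU i) mulr_sumr.
  by apply: eq_bigr => k _; ring.
move=> i' hi'.
transitivity (x 0 i' * \sum_j lcoef V (lift ord_max i') j * V j i); last first.
  by rewrite sum_aV0 // mulr0.
rewrite mulr_sumr; apply: eq_bigr => k _; ring.
Qed.

Lemma row_in_simplex (R : realFieldType) (n : nat) (V : 'M[R]_(n.+1, n)) k :
  simplex V (row k V).
Proof.
exists (fun j => (j == k)%:R); split.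
- by move=> j; rewrite ler0n.
- rewrite (bigD1 k) //= eqxx big1 ?addr0 // => j /negbTE -> //.
- rewrite (bigD1 k) //= eqxx scale1r big1 ?addr0 // => j /negbTE ->.
  by rewrite scale0r.
Qed.

Lemma simplex_ge0 (R : realFieldType) (n : nat) (V : 'M[R]_(n.+1, n))
  (hU : vertex_matrix V \in unitmx) x j : simplex V x -> 0 <= lagr V j x.
Proof.
move=> [w [w0 w1 ->]]; rewrite lagr_comb //.
rewrite (bigD1 j) //= lagr_vertex // eqxx mulr1 big1 ?addr0 //.
by move=> k /negbTE hk; rewrite lagr_vertex // hk mulr0.
Qed.

Definition Mx (R : realFieldType) (n : nat) (V : 'M[R]_(n.+1, n)) j :=
  lcoef V ord_max j + \sum_(i < n) pp (lcoef V (lift ord_max i) j).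
Definition Mn (R : realFieldType) (n : nat) (V : 'M[R]_(n.+1, n)) j :=
  lcoef V ord_max j - \sum_(i < n) nn (lcoef V (lift ord_max i) j).

Lemma lagr_le_Mx (R : realFieldType) (n : nat) (V : 'M[R]_(n.+1, n)) j x :
  cube x -> lagr V j x <= Mx V j.
Proof.
move=> hx; rewrite /lagr /Mx addrC lerD2l; apply: ler_sum => i _.
exact: pp_bound.
Qed.

Lemma lagr_ge_Mn (R : realFieldType) (n : nat) (V : 'M[R]_(n.+1, n)) j x :
  cube x -> Mn V j <= lagr V j x.
Proof.
move=> hx; rewrite /lagr /Mn addrC -sumrN lerD2r; apply: ler_sum => i _.
exact: nn_bound.
Qed.

Definition xp (R : realFieldType) (n : nat) (V : 'M[R]_(n.+1, n)) j : 'rV[R]_n :=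
  \row_i (if 0 <= lcoef V (lift ord_max i) j then 1 else 0).
Definition xn (R : realFieldType) (n : nat) (V : 'M[R]_(n.+1, n)) j : 'rV[R]_n :=
  \row_i (if lcoef V (lift ord_max i) j < 0 then 1 else 0).

Lemma xp_vertex (R : realFieldType) (n : nat) (V : 'M[R]_(n.+1, n)) j :
  cube_vertex (xp V j).
Proof. by move=> i; rewrite mxE; case: ifP => _; [right|left]. Qed.
Lemma xn_vertex (R : realFieldType) (n : nat) (V : 'M[R]_(n.+1, n)) j :
  cube_vertex (xn V j).
Proof. by move=> i; rewrite mxE; case: ifP => _; [right|left]. Qed.

Lemma vertex_cube (R : realFieldType) (n : nat) (x : 'rV[R]_n) :
  cube_vertex x -> cube x.
Proof. by move=> h i; case: (h i) => ->; rewrite ?lexx ?ler01. Qed.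

Lemma lagr_xp (R : realFieldType) (n : nat) (V : 'M[R]_(n.+1, n)) j :
  lagr V j (xp V j) = Mx V j.
Proof.
rewrite /lagr /Mx addrC; congr (_ + _); apply: eq_bigr => i _.
by rewrite mxE /pp; case: ifP => _; rewrite ?mulr1 ?mulr0.
Qed.

Lemma lagr_xn (R : realFieldType) (n : nat) (V : 'M[R]_(n.+1, n)) j :
  lagr V j (xn V j) = Mn V j.
Proof.
rewrite /lagr /Mn addrC -sumrN; congr (_ + _); apply: eq_bigr => i _.
by rewrite mxE /nn; case: ifP => _; rewrite ?mulr1 ?mulr0 ?opprK ?oppr0.
Qed.

Lemma center_lagr (R : realFieldType) (n : nat) (V : 'M[R]_(n.+1, n))
  (hU : vertex_matrix V \in unitmx) j :
  lagr V j (simplex_center V) = (n.+1%:R)^-1.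
Proof.
rewrite /simplex_center scaler_sumr lagr_comb; last first.
  by rewrite sumr_const card_ord -[_ *+ n.+1]mulr_natr mulVf // pnatr_eq0.
rewrite (bigD1 j) //= lagr_vertex // eqxx mulr1 big1 ?addr0 //.
by move=> k /negbTE hk; rewrite lagr_vertex // hk mulr0.
Qed.

Lemma natS (R : realFieldType) (n : nat) : n.+1%:R = n%:R + 1 :> R.
Proof. by rewrite -addn1 natrD. Qed.

Lemma key (R : realFieldType) (n : nat) (V : 'M[R]_(n.+1, n)) :
  (0 < n)%N ->
  vertex_matrix V \in unitmx ->
  psubset (simplex V) (@cube R n) ->
  psubset (@cube R n) (homot (simplex_center V) n%:R (simplex V)) ->
  let q := (n%:R - 1) / (n%:R + 1) : R in
  (forall j, Mx V j = 1) /\ (forall j, Mn V j = - q) /\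
  (forall i : 'I_n, \sum_j pp (lcoef V (lift ord_max i) j) = 1) /\
  (forall i : 'I_n, \sum_j nn (lcoef V (lift ord_max i) j) = 1).
Proof.
move=> hn hU hSQ hQS q.
set N : R := n%:R.
have N0 : 0 < N by rewrite ltr0n.
have N1 : N + 1 != 0 by rewrite -natS pnatr_eq0.
have qN : q * (N + 1) = N - 1 by rewrite /q; field.
have Vc : forall k i, 0 <= V k i <= 1.
  by move=> k i; have := hSQ _ (row_in_simplex V k) i; rewrite mxE.
have s_eq : forall i : 'I_n, \sum_j pp (lcoef V (lift ord_max i) j) =
                      \sum_j nn (lcoef V (lift ord_max i) j).
  move=> i; apply/eqP; rewrite -subr_eq0 -sumrB; apply/eqP.
  by rewrite -[RHS](sum_a hU i); apply: eq_bigr => j _; rewrite -ppnn.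
have s_ge1 : forall i : 'I_n, 1 <= \sum_j pp (lcoef V (lift ord_max i) j).
  move=> i; rewrite -(sum_aV1 hU i); apply: ler_sum => j _; exact: pp_bound.
set T := \sum_(i < n) \sum_j pp (lcoef V (lift ord_max i) j).
have TN : N <= T.
  rewrite /T /N -[n in n%:R](card_ord n) -sumr_const; apply: ler_sum => i _.
  exact: s_ge1.
have Mn_ge : forall j, - q <= Mn V j.
  move=> j; rewrite -lagr_xn.
  have [y hy ->] := hQS _ (vertex_cube (xn_vertex V j)).
  rewrite lagr_seg center_lagr // natS.
  have := @simplex_ge0 _ _ V hU y j hy.
  have u1 : (N + 1)^-1 * (N + 1) = 1 by rewrite mulVf.
  rewrite /q; move: ((N + 1)^-1) u1 => u u1 hy0.
  rewrite mulrC -/N.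
  nra.
have sumMn : \sum_j Mn V j = 1 - T.
  rewrite /Mn sumrB sum_b // /T exchange_big /=; congr (_ - _).
  by apply: eq_bigr => i _; rewrite s_eq.
have sumMx : \sum_j Mx V j = 1 + T.
  by rewrite /Mx big_split /= sum_b // /T exchange_big.
have sum0 : \sum_j (Mn V j + q) = 0.
  apply/eqP; rewrite eq_le; apply/andP; split; last first.
    by apply: sumr_ge0 => j _; have := Mn_ge j; lra.
  rewrite big_split /= sumMn sumr_const card_ord -mulr_natr natS -/N qN.
  lra.
have TN' : T = N.
  have := sum0; rewrite big_split /= sumMn sumr_const card_ord -mulr_natr natS -/N qN.
  lra.
have hMn : forall j, Mn V j = - q.
  have hF : forall j : 'I_n.+1, true -> 0 <= Mn V j + q.
    by move=> j' _; have := Mn_ge j'; lra.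
  move=> j; have := @psumr_eq0P _ _ _ _ hF sum0 j isT; lra.
have hs : forall i : 'I_n, \sum_j pp (lcoef V (lift ord_max i) j) = 1.
  have hF : forall i : 'I_n, true -> 0 <= \sum_j pp (lcoef V (lift ord_max i) j) - 1.
    by move=> i' _; have := s_ge1 i'; lra.
  have s0 : \sum_(i < n) (\sum_j pp (lcoef V (lift ord_max i) j) - 1) = 0.
    rewrite sumrB -/T sumr_const card_ord TN'; lra.
  move=> i; have := @psumr_eq0P _ _ _ _ hF s0 i isT; lra.
have hMx : forall j, Mx V j = 1.
  have Mx_ge : forall j, 1 <= Mx V j.
    move=> j; have E : lagr V j (row j V) = 1 by rewrite lagr_vertex // eqxx.
    rewrite -E.
    by apply: lagr_le_Mx; apply: hSQ; apply: row_in_simplex.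
  have hF : forall j : 'I_n.+1, true -> 0 <= Mx V j - 1.
    by move=> j' _; have := Mx_ge j'; lra.
  have s0 : \sum_j (Mx V j - 1) = 0.
    rewrite sumrB sumMx sumr_const card_ord TN' -/N natS; lra.
  move=> j; have := @psumr_eq0P _ _ _ _ hF s0 j isT; lra.
split; [exact: hMx | split; [exact: hMn | split; [exact: hs|]]].
by move=> i; rewrite -s_eq hs.
Qed.

Lemma homot_sub (R : realFieldType) (n : nat) (c : 'rV[R]_n) s (A B : pset R n) :
  psubset A B -> psubset (homot c s A) (homot c s B).
Proof. by move=> h x [y /h hy ->]; exists y. Qed.

Lemma homot_comp (R : realFieldType) (n : nat) (c : 'rV[R]_n) s t (A : pset R n) :
  psubset (homot c s (homot c t A)) (homot c (s * t) A).
Proof.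
move=> x [y [z hz ->] ->]; exists z => //.
by rewrite (addrC c (t *: _)) addrK scalerA.
Qed.

Lemma center_half (R : realFieldType) (n : nat) (V : 'M[R]_(n.+1, n)) :
  (0 < n)%N ->
  vertex_matrix V \in unitmx ->
  psubset (simplex V) (@cube R n) ->
  psubset (@cube R n) (homot (simplex_center V) n%:R (simplex V)) ->
  simplex_center V = const_mx (2^-1).
Proof.
move=> hn hU hSQ hQS.
have [hMx [hMn _]] := key hn hU hSQ hQS.
set h : 'rV[R]_n := const_mx (2^-1).
have lh : forall j, lagr V j h = (n.+1%:R)^-1.
  move=> j.
  have -> : lagr V j h = (Mx V j + Mn V j) / 2.
    rewrite /lagr /Mx /Mn.
    have -> : \sum_(i < n) lcoef V (lift ord_max i) j * h 0 i =
      (\sum_(i < n) pp (lcoef V (lift ord_max i) j) -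
       \sum_(i < n) nn (lcoef V (lift ord_max i) j)) / 2.
      rewrite -sumrB mulr_suml; apply: eq_bigr => i _.
      by rewrite mxE {1}(ppnn (lcoef V (lift ord_max i) j)).
    by field.
  rewrite hMx hMn natS.
  have N0 : 0 < (n%:R : R) by rewrite ltr0n.
  field; rewrite addrC -natS pnatr_eq0 //.
rewrite [RHS](lagr_decomp hU) /simplex_center scaler_sumr.
by apply: eq_bigr => j _; rewrite lh.
Qed.

Unset Implicit Arguments.

Theorem theorem6p1 (R : realFieldType) (n : nat) (V : 'M[R]_(n.+1, n)) :
  (0 < n)%N ->
  vertex_matrix V \in unitmx ->
  psubset (simplex V) (@cube R n) ->
  psubset (@cube R n) (homot (simplex_center V) n%:R (simplex V)) ->
  let S := simplex V in
  let Q := @cube R n in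
  let cS := homot (simplex_center V) in
  let cQ := homot (@cube_center R n) in
  let l := lcoef V in
  let q := (n%:R - 1) / (n%:R + 1) : R in
  (* (i), (ii) *)
  (forall j, is_max (@cube_vertex R n) (lagr V j) 1) /\
  (forall j, is_max (@cube_vertex R n) (fun x => - lagr V j x) q) /\
  (* (iii) *)
  (forall j, is_max Q (lagr V j) 1) /\
  (forall j, is_max Q (fun x => - lagr V j x) q) /\
  (* (iv) *)
  simplex_center V = const_mx (2^-1) /\ @cube_center R n = const_mx (2^-1) /\
  (* (v) *)
  (forall k : nat,
     psubset (cQ ((n%:R ^+ k.+1)^-1) Q) (cS ((n%:R ^+ k)^-1) S) /\
     psubset (cS ((n%:R ^+ k)^-1) S) (cQ ((n%:R ^+ k)^-1) Q) /\
     psubset (cS (n%:R ^+ k) S) (cQ (n%:R ^+ k) Q) /\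
     psubset (cQ (n%:R ^+ k) Q) (cS (n%:R ^+ k.+1) S)) /\
  (* (vi) *)
  (forall i : 'I_n, \sum_(j < n.+1) `|l (lift ord_max i) j| = 2) /\
  (forall j : 'I_n.+1, \sum_(i < n) `|l (lift ord_max i) j| = 2 * n%:R / (n%:R + 1)) /\
  (* (vii) *)
  (forall j : 'I_n.+1,
     \sum_(i < n | 0 <= l (lift ord_max i) j) l (lift ord_max i) j = 1 - l ord_max j /\
     \sum_(i < n | l (lift ord_max i) j < 0) `|l (lift ord_max i) j| = q + l ord_max j) /\
  (* (viii) *)
  (forall x, Q x -> forall j, - q <= lagr V j x <= 1).
Proof.
move=> hn hU hSQ hQS S Q cS cQ l q.
have [hMx [hMn [hsp hsn]]] := key hn hU hSQ hQS.
have hc := center_half hn hU hSQ hQS.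
have N0 : 0 < (n%:R : R) by rewrite ltr0n.
have NN0 : (n%:R : R) != 0 by rewrite pnatr_eq0 -lt0n.
have iQ : forall j, is_max Q (lagr V j) 1.
  move=> j; split; first by exists (xp V j); [exact: vertex_cube (xp_vertex V j)|rewrite lagr_xp].
  by move=> x hx; rewrite -(hMx j); apply: lagr_le_Mx.
have iiQ : forall j, is_max Q (fun x => - lagr V j x) q.
  move=> j; split; first by exists (xn V j); [exact: vertex_cube (xn_vertex V j)|rewrite lagr_xn hMn opprK].
  by move=> x hx; rewrite lerNl -(hMn j); apply: lagr_ge_Mn.
split.
  move=> j; split; first by exists (xp V j); [exact: xp_vertex|rewrite lagr_xp].
  by move=> x /vertex_cube hx; have [_ ] := iQ j; apply.
split.
  move=> j; split; first by exists (xn V j); [exact: xn_vertex|rewrite lagr_xn hMn opprK].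
  by move=> x /vertex_cube hx; have [_ ] := iiQ j; apply.
split; first exact: iQ.
split; first exact: iiQ.
split; first exact: hc.
split; first by [].
split.
  move=> k; rewrite /cS /cQ hc -/(@cube_center R n).
  have hQS' := hQS; rewrite hc in hQS'.
  split.
    move=> x /(homot_sub hQS') /homot_comp.
    have -> : (n%:R : R) ^- k.+1 * n%:R = n%:R ^- k by rewrite exprS invfM mulrAC mulVf ?mul1r.
    by [].
  split; first exact: homot_sub.
  split; first exact: homot_sub.
  move=> x /(homot_sub hQS') /homot_comp.
  by rewrite exprSr.
split.
  move=> i; under eq_bigr do rewrite ppnn_abs.
  by rewrite big_split /= hsp hsn.
split.
  move=> j; under eq_bigr do rewrite ppnn_abs.
  rewrite big_split /=.
  have := hMx j; have := hMn j; rewrite /Mx /Mn /q => h1 h2.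
  have -> : \sum_(i < n) pp (lcoef V (lift ord_max i) j) +
            \sum_(i < n) nn (lcoef V (lift ord_max i) j) =
            1 + (n%:R - 1) / (n%:R + 1) by lra.
  have N1 : (n%:R : R) + 1 != 0 by rewrite -natS pnatr_eq0.
  by field.
split.
  move=> j; split.
    rewrite big_mkcond /=.
    have := hMx j; rewrite /Mx => h1.
    have -> : 1 - l ord_max j = \sum_(i < n) pp (lcoef V (lift ord_max i) j) by rewrite /l; lra.
    by apply: eq_bigr.
  rewrite big_mkcond /=.
  have := hMn j; rewrite /Mn => h1.
  have -> : q + l ord_max j = \sum_(i < n) nn (lcoef V (lift ord_max i) j) by rewrite /l /q in h1 *; lra.
  apply: eq_bigr => i _; rewrite /nn; case: ifP => // h.
  by rewrite ltr0_norm.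
move=> x hx j; apply/andP; split.
  by rewrite -(hMn j); apply: lagr_ge_Mn.
by rewrite -(hMx j); apply: lagr_le_Mx.
Qed.
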